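(* Let $C\subset\mathbb R^3$ be a non-closed embedded curve of length $l>0$ with nowhere vanishing curvature and arc-length parametrization $\mathbf c:[-l/2,l/2]\to\mathbb R^3$ inducing its orientation. Let $F\in\mathcal D_*(C)$ be a normal form with $F(s,0)=\mathbf c(s)$, and let $T$ be a non-trivial symmetry of $C$. Then: (1) if $T$ is a positive symmetry, then $T\circ F=F_*$; moreover, if $\mu_F$ has a symmetry, then $T\circ F(-s,v)=\check F(s,v)$; (2) if $T$ is a negative symmetry, then $T\circ F=\check F_*$; moreover, if $\mu_F$ has a symmetry, then $T\circ F(-s,v)=F(s,v)$.
   Context: $-C$ denotes $C$ with reversed orientation. For a regular parametrization $\mathbf c_f$ of $C$: curvature $\kappa_f$, torsion $\tau_f$, Frenet frame $(\mathbf e,\mathbf n,\mathbf b)$; $\kappa$ is the curvature of $\mathbf c$. A developable strip along $C$ is the germ along $C$ of a $C^\infty$ embedding $f(u,v)=f(u,0)+v\,\xi_f(u)$ with $\mathbf c_f(u):=f(u,0)$ parametrizing $C$, $\xi_f$ unit, and zero Gaussian curvature; write $\xi_f=\cos\beta_f\,\mathbf e+\sin\beta_f(\cos\alpha_f\,\mathbf n+\sin\alpha_f\,\mathbf b)$. $\mathcal D(C)$: such strips with $\mathbf c_f$ inducing the orientation of $C$ and $0<|\cos\alpha_f|<1$, normalized by $0<|\alpha_f|<\pi/2$ (first angular function), $0<\beta_f<\pi$. Geodesic curvature $\mu_f=\kappa_f\cos\alpha_f$; admissible ($\in\mathcal D_*(C)$) if $\mu_f<\min\kappa_f$ everywhere.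 A normal form is a strip $F(s,v)$ defined near $[-l/2,l/2]\times\{0\}$ with $s\mapsto F(s,0)$ an arc-length parametrization of $C$ (of either orientation); a normal form is determined by that parametrization and its first angular function $\alpha$ (since zero Gaussian curvature means $\cot\beta=(\alpha'+\tau)/(\kappa\sin\alpha)$), and every smooth $\alpha$ with values in $(-\pi/2,\pi/2)\setminus\{0\}$ occurs. Dual: $\check F$ is the normal form with $\check F(s,0)=F(s,0)$ and first angular function $-\alpha_F$. Inverse: $F_*\in\mathcal D_*(-C)$ is the normal form with $F_*(s,0)=\mathbf c(-s)$ whose first angular function (w.r.t. the Frenet frame of $s\mapsto\mathbf c(-s)$) has the same sign as $\alpha_F(s)$ and satisfies $\kappa(-s)\cos\alpha_{F_*}(s)=\kappa(s)\cos\alpha_F(s)$; the inverse dual $\check F_*$ is the dual of $F_*$. A function $\mu$ on $[-l/2,l/2]$ has a symmetry if $\mu(-s)=\mu(s)$ for all $s$. A symmetry of $C$ is an isometry $T\ne\mathrm{id}$ of $\mathbb R^3$ with $T(C)=C$; it is non-trivial if $T(\mathbf x)\ne\mathbf x$ for some $\mathbf x\in C$, and positive (resp. negative) if $T$ preserves (resp. reverses) the orientation of $\mathbb R^3$. *)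

(* Defs.v *)
From Stdlib Require Import Reals.
From Coquelicot Require Import Coquelicot.
Open Scope R_scope.

Definition V3 := (R * R * R)%type.
Definition vx (a : V3) : R := fst (fst a).
Definition vy (a : V3) : R := snd (fst a).
Definition vz (a : V3) : R := snd a.
Definition mkV (x y z : R) : V3 := (x, y, z).
Definition vadd (a b : V3) : V3 := mkV (vx a + vx b) (vy a + vy b) (vz a + vz b).
Definition vscal (k : R) (a : V3) : V3 := mkV (k * vx a) (k * vy a) (k * vz a).
Definition vsub (a b : V3) : V3 := vadd a (vscal (-1) b).
Definition dot (a b : V3) : R := vx a * vx b + vy a * vy b + vz a * vz b.
Definition cross (a b : V3) : V3 :=
  mkV (vy a * vz b - vz a * vy b) (vz a * vx b - vx a * vz b) (vx a * vy b - vy a * vx b).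
Definition vnorm (a : V3) : R := sqrt (dot a a).
Definition det3 (a b c : V3) : R := dot (cross a b) c.
Definition e1 : V3 := mkV 1 0 0.
Definition e2 : V3 := mkV 0 1 0.
Definition e3 : V3 := mkV 0 0 1.

Definition Dv (c : R -> V3) : R -> V3 := fun t =>
  mkV (Derive (fun u => vx (c u)) t) (Derive (fun u => vy (c u)) t)
      (Derive (fun u => vz (c u)) t).

Definition smooth_fun (f : R -> R) : Prop := forall (n : nat) (t : R), ex_derive_n f n t.
Definition smooth_curve (c : R -> V3) : Prop :=
  smooth_fun (fun u => vx (c u)) /\ smooth_fun (fun u => vy (c u)) /\
  smooth_fun (fun u => vz (c u)).

Definition curvature (c : R -> V3) (s : R) : R :=
  vnorm (cross (Dv c s) (Dv (Dv c) s)) / (vnorm (Dv c s)) ^ 3.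
Definition tangent (c : R -> V3) (s : R) : V3 := vscal (/ vnorm (Dv c s)) (Dv c s).
Definition binormal (c : R -> V3) (s : R) : V3 :=
  vscal (/ vnorm (cross (Dv c s) (Dv (Dv c) s))) (cross (Dv c s) (Dv (Dv c) s)).
Definition principal_normal (c : R -> V3) (s : R) : V3 := cross (binormal c s) (tangent c s).
Definition torsion (c : R -> V3) (s : R) : R :=
  det3 (Dv c s) (Dv (Dv c) s) (Dv (Dv (Dv c)) s) / (vnorm (cross (Dv c s) (Dv (Dv c) s))) ^ 2.

(** Second angular function of a normal form, determined by zero Gaussian
    curvature: cot beta = (alpha' + tau) / (kappa sin alpha), 0 < beta < pi. *)
Definition beta_nf (c : R -> V3) (alpha : R -> R) (s : R) : R :=
  PI / 2 - atan ((Derive alpha s + torsion c s) / (curvature c s * sin (alpha s))).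

Definition xi_nf (c : R -> V3) (alpha : R -> R) (s : R) : V3 :=
  vadd (vscal (cos (beta_nf c alpha s)) (tangent c s))
       (vscal (sin (beta_nf c alpha s))
              (vadd (vscal (cos (alpha s)) (principal_normal c s))
                    (vscal (sin (alpha s)) (binormal c s)))).

Definition normal_form (c : R -> V3) (alpha : R -> R) : R -> R -> V3 :=
  fun s v => vadd (c s) (vscal v (xi_nf c alpha s)).

Definition rev_curve (c : R -> V3) : R -> V3 := fun s => c (- s).

Definition in_I (l s : R) : Prop := - (l / 2) <= s <= l / 2.

(** Equality of germs of strips along [-l/2,l/2] x {0}. *)
Definition germ_eq (l : R) (G H : R -> R -> V3) : Prop :=
  exists eps : R, 0 < eps /\
    forall s v, in_I l s -> Rabs v < eps -> G s v = H s v.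

Definition isometry (T : V3 -> V3) : Prop :=
  forall x y, vnorm (vsub (T x) (T y)) = vnorm (vsub x y).
Definition orient_det (T : V3 -> V3) : R :=
  det3 (vsub (T e1) (T (mkV 0 0 0))) (vsub (T e2) (T (mkV 0 0 0)))
       (vsub (T e3) (T (mkV 0 0 0))).
Definition positive_isometry (T : V3 -> V3) : Prop := isometry T /\ 0 < orient_det T.
Definition negative_isometry (T : V3 -> V3) : Prop := isometry T /\ orient_det T < 0.

Definition on_curve (l : R) (c : R -> V3) (x : V3) : Prop := exists t, in_I l t /\ x = c t.

Definition nontrivial_symmetry (l : R) (c : R -> V3) (T : V3 -> V3) : Prop :=
  isometry T /\ T <> (fun x => x) /\
  (forall x, on_curve l c x -> on_curve l c (T x)) /\
  (forall y, on_curve l c y -> exists x, on_curve l c x /\ T x = y) /\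
  (exists x, on_curve l c x /\ T x <> x).

Definition mu_nf (c : R -> V3) (alpha : R -> R) (s : R) : R := curvature c s * cos (alpha s).

(* Main.v *)
Require Import Defs.
From Stdlib Require Import Reals Lra Psatz FunctionalExtensionality Classical ClassicalEpsilon.
From Coquelicot Require Import Coquelicot.
Open Scope R_scope.


Definition Aapp (f1 f2 f3 x : V3) : V3 :=
  vadd (vscal (vx x) f1) (vadd (vscal (vy x) f2) (vscal (vz x) f3)).
Definition orthon (f1 f2 f3 : V3) : Prop :=
  dot f1 f1 = 1 /\ dot f2 f2 = 1 /\ dot f3 f3 = 1 /\
  dot f1 f2 = 0 /\ dot f1 f3 = 0 /\ dot f2 f3 = 0.

Ltac vd := repeat match goal with v : V3 |- _ =>
  let a := fresh "a" in let b := fresh "b" in let c := fresh "c" in destruct v as [[a b] c] end.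
Ltac vu := unfold det3, Aapp, vsub, vadd, vscal, dot, cross, mkV, vx, vy, vz, e1, e2, e3 in *; simpl in *.

Lemma v3_eq (a b : V3) : vx a = vx b -> vy a = vy b -> vz a = vz b -> a = b.
Proof. vd; vu; intros; subst; reflexivity. Qed.

Ltac vring := apply v3_eq; vu; ring.

Lemma A_add f1 f2 f3 x y : Aapp f1 f2 f3 (vadd x y) = vadd (Aapp f1 f2 f3 x) (Aapp f1 f2 f3 y).
Proof. vd; vring. Qed.
Lemma A_scal f1 f2 f3 k x : Aapp f1 f2 f3 (vscal k x) = vscal k (Aapp f1 f2 f3 x).
Proof. vd; vring. Qed.
Lemma vadd0 x : vadd (mkV 0 0 0) x = x.
Proof. vd; vring. Qed.
Lemma vscal1 x : vscal 1 x = x.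
Proof. vd; vring. Qed.

Lemma dot_A f1 f2 f3 x y : orthon f1 f2 f3 ->
  dot (Aapp f1 f2 f3 x) (Aapp f1 f2 f3 y) = dot x y.
Proof.
  intros (h11 & h22 & h33 & h12 & h13 & h23).
  transitivity (vx x * vx y * dot f1 f1 + vy x * vy y * dot f2 f2 + vz x * vz y * dot f3 f3
    + (vx x * vy y + vy x * vx y) * dot f1 f2 + (vx x * vz y + vz x * vx y) * dot f1 f3
    + (vy x * vz y + vz x * vy y) * dot f2 f3).
  { vd; vu; ring. }
  rewrite h11, h22, h33, h12, h13, h23. vd; vu; ring.
Qed.

Lemma vnorm_A f1 f2 f3 x : orthon f1 f2 f3 -> vnorm (Aapp f1 f2 f3 x) = vnorm x.
Proof. intros; unfold vnorm; rewrite dot_A; auto. Qed.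

Lemma det_sq f1 f2 f3 : orthon f1 f2 f3 -> det3 f1 f2 f3 * det3 f1 f2 f3 = 1.
Proof.
  intros (h11 & h22 & h33 & h12 & h13 & h23).
  transitivity (dot f1 f1 * (dot f2 f2 * dot f3 f3 - dot f2 f3 * dot f2 f3)
     - dot f1 f2 * (dot f1 f2 * dot f3 f3 - dot f2 f3 * dot f1 f3)
     + dot f1 f3 * (dot f1 f2 * dot f2 f3 - dot f2 f2 * dot f1 f3)).
  { vd; vu; ring. }
  rewrite h11, h22, h33, h12, h13, h23; ring.
Qed.

Lemma perp_id f1 f2 f3 w : vscal (det3 f1 f2 f3) w =
  vadd (vscal (dot f1 w) (cross f2 f3)) (vadd (vscal (dot f2 w) (cross f3 f1)) (vscal (dot f3 w) (cross f1 f2))).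
Proof. vd; vring. Qed.

Lemma cross_A f1 f2 f3 u v : orthon f1 f2 f3 ->
  cross (Aapp f1 f2 f3 u) (Aapp f1 f2 f3 v) = vscal (det3 f1 f2 f3) (Aapp f1 f2 f3 (cross u v)).
Proof.
  intros Ho. pose proof (det_sq _ _ _ Ho) as Hd.
  set (d := det3 f1 f2 f3) in *.
  set (w := vsub (cross (Aapp f1 f2 f3 u) (Aapp f1 f2 f3 v)) (vscal d (Aapp f1 f2 f3 (cross u v)))).
  assert (E1 : forall g, g = Aapp f1 f2 f3 (mkV 1 0 0) \/ g = Aapp f1 f2 f3 (mkV 0 1 0) \/ g = Aapp f1 f2 f3 (mkV 0 0 1) -> dot g w = 0).
  { intros g Hg. unfold w.
    assert (dot g (vsub (cross (Aapp f1 f2 f3 u) (Aapp f1 f2 f3 v)) (vscal d (Aapp f1 f2 f3 (cross u v))))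
      = det3 (Aapp f1 f2 f3 u) (Aapp f1 f2 f3 v) g - d * dot g (Aapp f1 f2 f3 (cross u v))) as ->.
    { vd; vu; ring. }
    destruct Hg as [-> | [-> | ->]]; rewrite dot_A by auto; unfold d; vd; vu; ring. }
  assert (Hw : vscal d w = mkV 0 0 0).
  { unfold d; rewrite perp_id.
    assert (forall x, dot (Aapp f1 f2 f3 x) w = 0 -> True) by auto.
    assert (Ea : f1 = Aapp f1 f2 f3 (mkV 1 0 0)) by (vd; vring).
    assert (Eb : f2 = Aapp f1 f2 f3 (mkV 0 1 0)) by (vd; vring).
    assert (Ec : f3 = Aapp f1 f2 f3 (mkV 0 0 1)) by (vd; vring).
    rewrite (E1 f1) by auto. rewrite (E1 f2) by auto. rewrite (E1 f3) by auto.
    vd; vring. }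
  assert (Hw2 : w = mkV 0 0 0).
  { rewrite <- (vscal1 w). replace 1 with (d * d) by auto.
    transitivity (vscal d (vscal d w)). vd; vring. rewrite Hw. vd; vring. }
  apply v3_eq; unfold w in Hw2; revert Hw2; vd; vu; intro H; injection H; intros; lra.
Qed.

Definition tanF D1 := vscal (/ vnorm D1) D1.
Definition binF D1 D2 := vscal (/ vnorm (cross D1 D2)) (cross D1 D2).
Definition norF D1 D2 := cross (binF D1 D2) (tanF D1).
Definition curvF D1 D2 := vnorm (cross D1 D2) / (vnorm D1) ^ 3.
Definition torF D1 D2 D3 := det3 D1 D2 D3 / (vnorm (cross D1 D2)) ^ 2.
Definition betaF D1 D2 D3 a a' := PI / 2 - atan ((a' + torF D1 D2 D3) / (curvF D1 D2 * sin a)).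
Definition XI D1 D2 D3 a a' :=
  vadd (vscal (cos (betaF D1 D2 D3 a a')) (tanF D1))
       (vscal (sin (betaF D1 D2 D3 a a'))
              (vadd (vscal (cos a) (norF D1 D2)) (vscal (sin a) (binF D1 D2)))).

Lemma xi_XI c al s : xi_nf c al s = XI (Dv c s) (Dv (Dv c) s) (Dv (Dv (Dv c)) s) (al s) (Derive al s).
Proof. reflexivity. Qed.
Lemma curv_F c s : curvature c s = curvF (Dv c s) (Dv (Dv c) s).
Proof. reflexivity. Qed.

Lemma vnorm_scal_pm d x : d * d = 1 -> vnorm (vscal d x) = vnorm x.
Proof. intros H; unfold vnorm; f_equal. transitivity ((d*d) * dot x x). vd; vu; ring. rewrite H; ring. Qed.

Lemma dot_scal k x y : dot (vscal k x) y = k * dot x y.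
Proof. vd; vu; ring. Qed.

Lemma L1 f1 f2 f3 D1 D2 D3 a a' : orthon f1 f2 f3 ->
  (det3 f1 f2 f3 = 1 \/ det3 f1 f2 f3 = -1) ->
  XI (Aapp f1 f2 f3 D1) (Aapp f1 f2 f3 D2) (Aapp f1 f2 f3 D3) (det3 f1 f2 f3 * a) (det3 f1 f2 f3 * a')
  = Aapp f1 f2 f3 (XI D1 D2 D3 a a').
Proof.
  intros Ho Hd. pose proof (det_sq _ _ _ Ho) as Hdd. set (d := det3 f1 f2 f3) in *.
  set (A := Aapp f1 f2 f3).
  assert (Et : tanF (A D1) = A (tanF D1)).
  { unfold tanF, A. rewrite vnorm_A, A_scal; auto. }
  assert (Ec : cross (A D1) (A D2) = vscal d (A (cross D1 D2))) by (apply cross_A; auto).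
  assert (En : vnorm (cross (A D1) (A D2)) = vnorm (cross D1 D2)).
  { rewrite Ec, vnorm_scal_pm by auto. unfold A; apply vnorm_A; auto. }
  assert (Eb : binF (A D1) (A D2) = vscal d (A (binF D1 D2))).
  { unfold binF. rewrite En, Ec. unfold A; rewrite A_scal. vd; vring. }
  assert (Eno : norF (A D1) (A D2) = A (norF D1 D2)).
  { unfold norF. rewrite Eb, Et.
    transitivity (vscal d (cross (A (binF D1 D2)) (A (tanF D1)))). vd; vring.
    unfold A; rewrite cross_A by auto. fold d. transitivity (vscal (d*d) (Aapp f1 f2 f3 (cross (binF D1 D2) (tanF D1)))).
    vd; vring. rewrite Hdd, vscal1; reflexivity. }
  assert (Ecu : curvF (A D1) (A D2) = curvF D1 D2).
  { unfold curvF. rewrite En. unfold A; rewrite vnorm_A; auto. }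
  assert (Eto : torF (A D1) (A D2) (A D3) = d * torF D1 D2 D3).
  { unfold torF. rewrite En. unfold det3 at 1. rewrite Ec. unfold A.
    rewrite dot_scal. rewrite dot_A by auto. unfold det3, Rdiv; ring. }
  assert (Ebe : betaF (A D1) (A D2) (A D3) (d * a) (d * a') = betaF D1 D2 D3 a a').
  { unfold betaF. rewrite Ecu, Eto. f_equal. f_equal.
    destruct Hd as [-> | ->].
    - rewrite !Rmult_1_l; reflexivity.
    - replace (-1 * a) with (- a) by ring. rewrite sin_neg.
      replace (curvF D1 D2 * - sin a) with (- (curvF D1 D2 * sin a)) by ring.
      unfold Rdiv. rewrite Rinv_opp. ring. }
  unfold XI. rewrite Ebe, Et, Eno, Eb.
  destruct Hd as [Hd1 | Hd1]; rewrite Hd1.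
  - rewrite !Rmult_1_l. unfold A. vd; vring.
  - replace (-1 * a) with (- a) by ring. rewrite sin_neg, cos_neg. unfold A. vd; vring.
Qed.

Lemma L2 D1 D2 D3 a a' :
  XI (vscal (-1) D1) D2 (vscal (-1) D3) (- a) a' = XI D1 D2 D3 a a'.
Proof.
  assert (Hm : -1 * -1 = 1) by ring.
  assert (Ec : cross (vscal (-1) D1) D2 = vscal (-1) (cross D1 D2)) by (vd; vring).
  assert (En : vnorm (cross (vscal (-1) D1) D2) = vnorm (cross D1 D2)).
  { rewrite Ec; apply vnorm_scal_pm; auto. }
  assert (Et : tanF (vscal (-1) D1) = vscal (-1) (tanF D1)).
  { unfold tanF. rewrite vnorm_scal_pm by auto. vd; vring. }
  assert (Eb : binF (vscal (-1) D1) D2 = vscal (-1) (binF D1 D2)).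
  { unfold binF. rewrite En, Ec. vd; vring. }
  assert (Eno : norF (vscal (-1) D1) D2 = norF D1 D2).
  { unfold norF. rewrite Eb, Et. vd; vring. }
  assert (Ecu : curvF (vscal (-1) D1) D2 = curvF D1 D2).
  { unfold curvF. rewrite En, vnorm_scal_pm; auto. }
  assert (Eto : torF (vscal (-1) D1) D2 (vscal (-1) D3) = torF D1 D2 D3).
  { unfold torF. rewrite En. f_equal. vd; vu; ring. }
  assert (Ebe : betaF (vscal (-1) D1) D2 (vscal (-1) D3) (- a) a' =
                PI / 2 - - atan ((a' + torF D1 D2 D3) / (curvF D1 D2 * sin a))).
  { unfold betaF. rewrite Ecu, Eto, <- atan_opp. f_equal. f_equal. rewrite sin_neg.
    replace (curvF D1 D2 * - sin a) with (- (curvF D1 D2 * sin a)) by ring.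
    unfold Rdiv. rewrite Rinv_opp. ring. }
  unfold XI. rewrite Ebe, Et, Eno, Eb. unfold betaF.
  rewrite !cos_shift, !sin_shift, sin_neg, cos_neg, sin_neg, cos_neg. vd; vring.
Qed.

Lemma curvF_A f1 f2 f3 x y : orthon f1 f2 f3 ->
  curvF (Aapp f1 f2 f3 x) (Aapp f1 f2 f3 y) = curvF x y.
Proof.
  intros Ho. pose proof (det_sq _ _ _ Ho) as Hdd. unfold curvF.
  rewrite cross_A, vnorm_scal_pm, !vnorm_A; auto.
Qed.

Lemma curvF_neg x y : curvF (vscal (-1) x) y = curvF x y.
Proof.
  unfold curvF.
  replace (cross (vscal (-1) x) y) with (vscal (-1) (cross x y)) by (vd; vring).
  rewrite !vnorm_scal_pm by ring. reflexivity.
Qed.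

Lemma der_lin (a b c : R -> R) k k1 k2 k3 t : ex_derive a t -> ex_derive b t -> ex_derive c t -> Derive (fun u => k + (a u * k1 + (b u * k2 + c u * k3))) t = Derive a t * k1 + (Derive b t * k2 + Derive c t * k3).
Proof. intros. apply is_derive_unique. auto_derive; auto. change (Derive (fun x => a x)) with (Derive a). change (Derive (fun x => b x)) with (Derive b). change (Derive (fun x => c x)) with (Derive c). ring. Qed.
Lemma der_rev (a : R -> R) k t : ex_derive a (-t) -> Derive (fun u => k * a (-u)) t = - k * Derive a (-t).
Proof. intros. apply is_derive_unique. auto_derive; auto. change (Derive (fun x => a x)) with (Derive a). ring. Qed.
Lemma exd_lin (a b c : R -> R) k k1 k2 k3 t : ex_derive a t -> ex_derive b t -> ex_derive c t -> ex_derive (fun u => k + (a u * k1 + (b u * k2 + c u * k3))) t.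
Proof. intros. auto_derive; auto. Qed.
Lemma exd_rev (a : R -> R) k t : ex_derive a (-t) -> ex_derive (fun u => k * a (-u)) t.
Proof. intros. auto_derive; auto. Qed.

Definition cder (g : R -> V3) : Prop := forall t,
  ex_derive (fun u => vx (g u)) t /\ ex_derive (fun u => vy (g u)) t /\ ex_derive (fun u => vz (g u)) t.

Lemma smooth_cder c : smooth_curve c -> cder c /\ cder (Dv c) /\ cder (Dv (Dv c)).
Proof.
  intros (hx & hy & hz). split; [|split]; intro t; repeat split.
  all: first [ exact (hx 1%nat t) | exact (hy 1%nat t) | exact (hz 1%nat t)
             | exact (hx 2%nat t) | exact (hy 2%nat t) | exact (hz 2%nat t)
             | exact (hx 3%nat t) | exact (hy 3%nat t) | exact (hz 3%nat t) ].
Qed.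

Lemma Dv_aff (g h : R -> V3) f1 f2 f3 p : cder g ->
  (forall t, h t = vadd p (Aapp f1 f2 f3 (g t))) -> forall t, Dv h t = Aapp f1 f2 f3 (Dv g t).
Proof.
  intros Hg Hh t. destruct (Hg t) as (gx & gy & gz).
  unfold Dv. apply v3_eq; simpl.
  - rewrite (Derive_ext (fun u => vx (h u)) (fun u => vx p + (vx (g u) * vx f1 + (vy (g u) * vx f2 + vz (g u) * vx f3))))
      by (intro u; rewrite Hh; reflexivity).
    exact (der_lin (fun u => vx (g u)) (fun u => vy (g u)) (fun u => vz (g u)) _ _ _ _ t gx gy gz).
  - rewrite (Derive_ext (fun u => vy (h u)) (fun u => vy p + (vx (g u) * vy f1 + (vy (g u) * vy f2 + vz (g u) * vy f3))))
      by (intro u; rewrite Hh; reflexivity).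
    exact (der_lin (fun u => vx (g u)) (fun u => vy (g u)) (fun u => vz (g u)) _ _ _ _ t gx gy gz).
  - rewrite (Derive_ext (fun u => vz (h u)) (fun u => vz p + (vx (g u) * vz f1 + (vy (g u) * vz f2 + vz (g u) * vz f3))))
      by (intro u; rewrite Hh; reflexivity).
    exact (der_lin (fun u => vx (g u)) (fun u => vy (g u)) (fun u => vz (g u)) _ _ _ _ t gx gy gz).
Qed.

Lemma Dv_rev (g h : R -> V3) k : cder g ->
  (forall t, h t = vscal k (g (- t))) -> forall t, Dv h t = vscal (- k) (Dv g (- t)).
Proof.
  intros Hg Hh t. destruct (Hg (- t)) as (gx & gy & gz).
  unfold Dv. apply v3_eq; simpl.
  - rewrite (Derive_ext (fun u => vx (h u)) (fun u => k * vx (g (- u)))) by (intro u; rewrite Hh; reflexivity).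
    exact (der_rev (fun u => vx (g u)) k t gx).
  - rewrite (Derive_ext (fun u => vy (h u)) (fun u => k * vy (g (- u)))) by (intro u; rewrite Hh; reflexivity).
    exact (der_rev (fun u => vy (g u)) k t gy).
  - rewrite (Derive_ext (fun u => vz (h u)) (fun u => k * vz (g (- u)))) by (intro u; rewrite Hh; reflexivity).
    exact (der_rev (fun u => vz (g u)) k t gz).
Qed.

Lemma DE (f g : R -> R) a b x : a < b -> (forall t, ex_derive f t) -> (forall t, ex_derive g t) ->
  (forall t, a <= t <= b -> f t = g t) -> a <= x <= b -> Derive f x = Derive g x.
Proof.
  intros Hab Hf Hg Heq Hx.
  assert (Hd : is_derive (fun t => f t - g t) x (Derive f x - Derive g x)).
  { apply (is_derive_minus f g); apply Derive_correct; auto. }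
  apply is_derive_Reals in Hd.
  cut (Derive f x - Derive g x = 0). lra.
  apply Rabs_eq_0. apply Rle_antisym; [| apply Rabs_pos].
  apply Rnot_lt_le; intro He.
  destruct (Hd _ He) as [del Hdel].
  set (m := Rmin (del / 2) ((b - a) / 2)).
  assert (Hm : 0 < m) by (unfold m; apply Rmin_pos; [pose proof (cond_pos del)|]; lra).
  assert (Hm1 : m <= del / 2) by apply Rmin_l.
  assert (Hm2 : m <= (b - a) / 2) by apply Rmin_r.
  pose proof (cond_pos del).
  destruct (Rle_lt_dec x ((a + b) / 2)) as [Hc | Hc].
  - specialize (Hdel m ltac:(lra) ltac:(rewrite Rabs_right; lra)).
    rewrite !Heq in Hdel by lra.
    replace ((g (x + m) - g (x + m) - (g x - g x)) / m - (Derive f x - Derive g x))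
      with (- (Derive f x - Derive g x)) in Hdel by (field; lra).
    rewrite Rabs_Ropp in Hdel. lra.
  - specialize (Hdel (- m) ltac:(lra) ltac:(rewrite Rabs_left; lra)).
    rewrite !Heq in Hdel by lra.
    replace ((g (x + - m) - g (x + - m) - (g x - g x)) / - m - (Derive f x - Derive g x))
      with (- (Derive f x - Derive g x)) in Hdel by (field; lra).
    rewrite Rabs_Ropp in Hdel. lra.
Qed.

Lemma Dv_eq_on (h1 h2 : R -> V3) a b : a < b -> cder h1 -> cder h2 ->
  (forall t, a <= t <= b -> h1 t = h2 t) -> forall t, a <= t <= b -> Dv h1 t = Dv h2 t.
Proof.
  intros Hab H1 H2 H t Ht. unfold Dv, mkV. f_equal; [f_equal|].
  all: apply (DE _ _ a b); auto; [intro u; apply H1 | intro u; apply H2 | intros u Hu; rewrite H; auto].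
Qed.

Lemma cder_rev (g : R -> V3) k : cder g -> cder (fun t => vscal k (g (- t))).
Proof.
  intros Hg u; destruct (Hg (- u)) as (gx & gy & gz); repeat split.
  exact (exd_rev (fun u => vx (g u)) k u gx). exact (exd_rev (fun u => vy (g u)) k u gy).
  exact (exd_rev (fun u => vz (g u)) k u gz).
Qed.

Lemma cder_aff (g : R -> V3) f1 f2 f3 p : cder g -> cder (fun t => vadd p (Aapp f1 f2 f3 (g t))).
Proof.
  intros Hg u; destruct (Hg u) as (gx & gy & gz); repeat split.
  all: exact (exd_lin (fun u => vx (g u)) (fun u => vy (g u)) (fun u => vz (g u)) _ _ _ _ u gx gy gz).
Qed.

Lemma key_step (g : R -> V3) f1 f2 f3 p k a b : a < b -> cder g ->
  (forall t, a <= t <= b -> vscal k (g (- t)) = vadd p (Aapp f1 f2 f3 (g t))) ->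
  forall t, a <= t <= b -> vscal (- k) (Dv g (- t)) = Aapp f1 f2 f3 (Dv g t).
Proof.
  intros Hab Hg H t Ht.
  rewrite <- (Dv_rev g (fun t => vscal k (g (- t))) k Hg (fun t => eq_refl) t).
  rewrite <- (Dv_aff g (fun t => vadd p (Aapp f1 f2 f3 (g t))) f1 f2 f3 p Hg (fun t => eq_refl) t).
  apply (Dv_eq_on _ _ a b); auto. apply cder_rev; auto. apply cder_aff; auto.
Qed.

Lemma dot_pos a : 0 <= dot a a.
Proof. vd; vu; nra. Qed.

Lemma dot0 a : dot a a = 0 -> a = mkV 0 0 0.
Proof. vd; vu; intro H.
  assert (a0 * a0 = 0) by nra. assert (b * b = 0) by nra. assert (c * c = 0) by nra.
  apply Rsqr_0_uniq in H0. apply Rsqr_0_uniq in H1. apply Rsqr_0_uniq in H2. subst. reflexivity. Qed.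

Lemma vnorm_dot a b : vnorm a = vnorm b -> dot a a = dot b b.
Proof. unfold vnorm; intro H; apply sqrt_inj; auto using dot_pos. Qed.

Lemma iso_affine T : isometry T ->
  let p := T (mkV 0 0 0) in
  let f1 := vsub (T e1) p in let f2 := vsub (T e2) p in let f3 := vsub (T e3) p in
  orthon f1 f2 f3 /\ forall x, T x = vadd p (Aapp f1 f2 f3 x).
Proof.
  intros HT p f1 f2 f3.
  set (U := fun x => vsub (T x) p).
  assert (HD : forall x y, dot (vsub (U x) (U y)) (vsub (U x) (U y)) = dot (vsub x y) (vsub x y)).
  { intros x y. rewrite <- (vnorm_dot _ _ (HT x y)). unfold U. f_equal; vd; vring. }
  assert (HN : forall x, dot (U x) (U x) = dot x x).
  { intro x. specialize (HD x (mkV 0 0 0)).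
    replace (vsub (U x) (U (mkV 0 0 0))) with (U x) in HD by (unfold U, p; vd; vring).
    rewrite HD. vd; vu; ring. }
  assert (HP : forall x y, dot (U x) (U y) = dot x y).
  { intros x y.
    transitivity ((dot (U x) (U x) + dot (U y) (U y) - dot (vsub (U x) (U y)) (vsub (U x) (U y))) / 2).
    { generalize (U x) (U y); intros; vd; vu; field. }
    rewrite HD, !HN. vd; vu; field. }
  assert (Ho : orthon f1 f2 f3).
  { unfold f1, f2, f3; fold (U e1) (U e2) (U e3).
    repeat split; rewrite HP; vu; ring. }
  split; auto.
  intro x.
  assert (Hw : dot (vsub (U x) (Aapp f1 f2 f3 x)) (vsub (U x) (Aapp f1 f2 f3 x)) = 0).
  { transitivity (dot (U x) (U x) - 2 * (vx x * dot (U x) f1 + vy x * dot (U x) f2 + vz x * dot (U x) f3)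
       + (vx x * vx x * dot f1 f1 + vy x * vy x * dot f2 f2 + vz x * vz x * dot f3 f3
          + 2 * vx x * vy x * dot f1 f2 + 2 * vx x * vz x * dot f1 f3 + 2 * vy x * vz x * dot f2 f3)).
    { generalize (U x); intros; vd; vu; ring. }
    unfold f1, f2, f3; fold (U e1) (U e2) (U e3). rewrite !HP. vd; vu; ring. }
  apply dot0 in Hw. unfold U in Hw. revert Hw. generalize (T x) (Aapp f1 f2 f3 x). intros.
  clear - Hw. vd; vu. injection Hw; intros. apply v3_eq; unfold vx, vy, vz; simpl; lra.
Qed.

Lemma orient_det_eq T : isometry T -> orient_det T =
  det3 (vsub (T e1) (T (mkV 0 0 0))) (vsub (T e2) (T (mkV 0 0 0))) (vsub (T e3) (T (mkV 0 0 0)))  .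
Proof. reflexivity. Qed.


Lemma cont_eps f x : continuity_pt f x -> forall e, 0 < e -> exists d, 0 < d /\
  forall t, Rabs (t - x) < d -> Rabs (f t - f x) < e.
Proof.
  intros H e He. destruct (H e He) as [d [Hd Hd2]]. exists d; split; auto.
  intros t Ht. destruct (Req_dec t x) as [-> | Hne].
  - rewrite Rminus_diag, Rabs_R0; auto.
  - apply (Hd2 t). split; [split; [exact I | auto] | exact Ht].
Qed.

Lemma eps_cont f x : (forall e, 0 < e -> exists d, 0 < d /\
  forall t, Rabs (t - x) < d -> Rabs (f t - f x) < e) -> continuity_pt f x.
Proof.
  intros H e He. destruct (H e He) as [d [Hd Hd2]]. exists d; split; auto.
  intros t [_ Ht]. apply Hd2. exact Ht.
Qed.

Lemma no_max (f : R -> R) p q : continuity f ->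
  (forall x y, p <= x <= q -> p <= y <= q -> f x = f y -> x = y) ->
  forall x y z, p <= x -> x < y -> y < z -> z <= q -> ~ (f x < f y /\ f z < f y).
Proof.
  intros Hf Hi x y z Hpx Hxy Hyz Hzq [H1 H2].
  destruct (Rle_lt_dec (f x) (f z)) as [Hle | Hlt].
  - destruct (Req_dec (f x) (f z)) as [Heq | Hne].
    + apply Hi in Heq; lra.
    + assert (Hc : continuity (fun t => f t - f z)).
      { change (fun t => f t - f z) with (minus_fct f (fct_cte (f z))).
        apply continuity_minus; auto. apply continuity_const. intros ? ?; reflexivity. }
      destruct (IVT _ x y Hc Hxy) as [w [Hw Hw2]]; try lra.
      assert (w = z) by (apply Hi; lra). lra.
  - assert (Hc : continuity (fun t => f x - f t)).
    { change (fun t => f x - f t) with (minus_fct (fct_cte (f x)) f).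
      apply continuity_minus; auto. apply continuity_const. intros ? ?; reflexivity. }
    destruct (IVT _ y z Hc Hyz) as [w [Hw Hw2]]; try lra.
    assert (w = x) by (apply Hi; lra). lra.
Qed.

Lemma no_min (f : R -> R) p q : continuity f ->
  (forall x y, p <= x <= q -> p <= y <= q -> f x = f y -> x = y) ->
  forall x y z, p <= x -> x < y -> y < z -> z <= q -> ~ (f y < f x /\ f y < f z).
Proof.
  intros Hf Hi x y z Hpx Hxy Hyz Hzq [H1 H2].
  apply (no_max (fun t => - f t) p q) with x y z; auto.
  - change (fun t => - f t) with (opp_fct f). apply continuity_opp; auto.
  intros a b Ha Hb E. apply Hi; auto. lra.
Qed.

Lemma mono (f : R -> R) p q : p < q -> continuity f ->
  (forall x y, p <= x <= q -> p <= y <= q -> f x = f y -> x = y) -> f p < f q ->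
  forall x y, p <= x -> x < y -> y <= q -> f x < f y.
Proof.
  intros Hpq Hf Hi Hfpq.
  assert (P1 : forall y, p < y <= q -> f p < f y).
  { intros y Hy. destruct (Req_dec y q) as [-> | Hne]; auto.
    destruct (Req_dec (f y) (f p)) as [E | E]. { apply Hi in E; lra. }
    destruct (Rlt_dec (f y) (f p)) as [Hlt | Hnlt]; [| lra].
    exfalso. apply (no_min f p q Hf Hi p y q); lra. }
  intros x y Hpx Hxy Hyq.
  destruct (Req_dec x p) as [-> | Hne]. { apply P1; lra. }
  assert (A1 : f p < f x) by (apply P1; lra).
  assert (A2 : f p < f y) by (apply P1; lra).
  destruct (Req_dec (f x) (f y)) as [E | E]. { apply Hi in E; lra. }
  destruct (Rlt_dec (f x) (f y)) as [Hlt | Hnlt]; auto.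
  exfalso. apply (no_max f p q Hf Hi p x y); lra.
Qed.

Lemma exd_D (a b c : R -> R) k1 k2 k3 x : ex_derive a x -> ex_derive b x -> ex_derive c x ->
  ex_derive (fun t => (a t + -1 * k1) * (a t + -1 * k1) + (b t + -1 * k2) * (b t + -1 * k2)
     + (c t + -1 * k3) * (c t + -1 * k3)) x.
Proof. intros. auto_derive; repeat split; auto. Qed.

Lemma exd_cont f x : ex_derive f x -> continuity_pt f x.
Proof. intro H. apply continuity_pt_filterlim. apply (ex_derive_continuous f x H). Qed.

Lemma term_bound d r e : Rabs d <= 1 -> Rabs r < e -> e <= 1 -> Rabs (2 * d * r + r * r) <= 3 * e.
Proof.
  intros Hd Hr He.
  eapply Rle_trans; [apply Rabs_triang|].
  rewrite !Rabs_mult. rewrite (Rabs_right 2) by lra.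
  assert (0 <= Rabs d) by apply Rabs_pos. assert (0 <= Rabs r) by apply Rabs_pos.
  nra.
Qed.

Definition Dd (c : R -> V3) x y := dot (vsub (c x) (c y)) (vsub (c x) (c y)).

Lemma Dd_refl c y : Dd c y y = 0.
Proof. unfold Dd. generalize (c y); intros; vd; vu; ring. Qed.

Lemma Dd_pos c x y : 0 <= Dd c x y.
Proof. apply dot_pos. Qed.

Lemma Dd_0 c x y : Dd c x y = 0 -> c x = c y.
Proof. unfold Dd. intro H. apply dot0 in H. revert H. generalize (c x) (c y). intros. vd; vu.
  injection H; intros. apply v3_eq; unfold vx, vy, vz; simpl; lra. Qed.

Lemma chord (c : R -> V3) y : cder c -> vnorm (Dv c y) = 1 -> forall e, 0 < e -> exists d, 0 < d /\
  forall x, Rabs (x - y) < d -> Rabs (Dd c x y - (x - y) ^ 2) <= e * (x - y) ^ 2.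
Proof.
  intros Hc Hn e He.
  destruct (Hc y) as (gx & gy & gz).
  pose (dx := Derive (fun u => vx (c u)) y).
  pose (dy := Derive (fun u => vy (c u)) y).
  pose (dz := Derive (fun u => vz (c u)) y).
  assert (Lx : derivable_pt_lim (fun u => vx (c u)) y dx) by (apply is_derive_Reals, Derive_correct, gx).
  assert (Ly : derivable_pt_lim (fun u => vy (c u)) y dy) by (apply is_derive_Reals, Derive_correct, gy).
  assert (Lz : derivable_pt_lim (fun u => vz (c u)) y dz) by (apply is_derive_Reals, Derive_correct, gz).
  change (vnorm (mkV dx dy dz) = 1) in Hn.
  clearbody dx dy dz.
  assert (H1 : dx * dx + dy * dy + dz * dz = 1).
  { rewrite <- sqrt_1 in Hn. unfold vnorm in Hn. apply sqrt_inj in Hn; try lra. exact Hn. apply dot_pos. }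
  set (e' := Rmin 1 (e / 9)).
  assert (He' : 0 < e') by (apply Rmin_pos; lra).
  assert (He1 : e' <= 1) by apply Rmin_l. assert (He2 : e' <= e / 9) by apply Rmin_r.
  destruct (Lx e' He') as [ddx Hx]. destruct (Ly e' He') as [ddy Hy]. destruct (Lz e' He') as [ddz Hz].
  exists (Rmin ddx (Rmin ddy ddz)). split.
  { apply Rmin_pos; [apply cond_pos | apply Rmin_pos; apply cond_pos]. }
  intros x Hxy.
  assert (M1 : Rmin ddx (Rmin ddy ddz) <= ddx) by apply Rmin_l.
  assert (M2 : Rmin ddx (Rmin ddy ddz) <= ddy) by (eapply Rle_trans; [apply Rmin_r | apply Rmin_l]).
  assert (M3 : Rmin ddx (Rmin ddy ddz) <= ddz) by (eapply Rle_trans; [apply Rmin_r | apply Rmin_r]).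
  destruct (Req_dec x y) as [-> | Hne].
  { rewrite Dd_refl. replace (y - y) with 0 by ring. rewrite pow_i by lia. rewrite Rminus_0_r, Rabs_R0. lra. }
  set (h := x - y) in *.
  assert (Hh : h <> 0) by (unfold h; lra).
  replace x with (y + h) in * by (unfold h; ring).
  specialize (Hx h Hh ltac:(lra)). specialize (Hy h Hh ltac:(lra)). specialize (Hz h Hh ltac:(lra)).
  set (rx := (vx (c (y + h)) - vx (c y)) / h - dx) in *.
  set (ry := (vy (c (y + h)) - vy (c y)) / h - dy) in *.
  set (rz := (vz (c (y + h)) - vz (c y)) / h - dz) in *.
  assert (Ec : c (y + h) = vadd (c y) (vscal h (mkV (dx + rx) (dy + ry) (dz + rz)))).
  { apply v3_eq; unfold rx, ry, rz; cbn [vadd vscal mkV vx vy vz fst snd]; unfold vx, vy, vz; simpl; field; auto. }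
  assert (HD : Dd c (y + h) y = h * h * ((dx + rx) * (dx + rx) + (dy + ry) * (dy + ry) + (dz + rz) * (dz + rz))).
  { unfold Dd. rewrite Ec. generalize (c y). intros. vd; vu; ring. }
  rewrite HD.
  try replace (y + h - y) with h by ring.
  replace (h ^ 2) with (h * h * (dx * dx + dy * dy + dz * dz)) by (rewrite H1; ring).
  replace (h * h * ((dx + rx) * (dx + rx) + (dy + ry) * (dy + ry) + (dz + rz) * (dz + rz)) - h * h * (dx * dx + dy * dy + dz * dz))
    with ((h * h) * ((2 * dx * rx + rx * rx) + (2 * dy * ry + ry * ry) + (2 * dz * rz + rz * rz))) by ring.
  rewrite H1, Rmult_1_r.
  rewrite Rabs_mult. rewrite (Rabs_right (h * h)) by nra.
  assert (Bx : Rabs (2 * dx * rx + rx * rx) <= 3 * e').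
  { apply term_bound; [apply Rabs_le; split; nra | exact Hx | exact He1]. }
  assert (By : Rabs (2 * dy * ry + ry * ry) <= 3 * e').
  { apply term_bound; [apply Rabs_le; split; nra | exact Hy | exact He1]. }
  assert (Bz : Rabs (2 * dz * rz + rz * rz) <= 3 * e').
  { apply term_bound; [apply Rabs_le; split; nra | exact Hz | exact He1]. }
  assert (Rabs ((2 * dx * rx + rx * rx) + (2 * dy * ry + ry * ry) + (2 * dz * rz + rz * rz)) <= e).
  { eapply Rle_trans. apply Rabs_triang. eapply Rle_trans. apply Rplus_le_compat_r. apply Rabs_triang. lra. }
  assert (0 <= h * h) by nra.
  rewrite (Rmult_comm e). apply Rmult_le_compat_l; auto.
Qed.

Lemma sym_rev l c f1 f2 f3 p :
  0 < l -> cder c -> (forall s, in_I l s -> vnorm (Dv c s) = 1) ->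
  (forall s t, in_I l s -> in_I l t -> c s = c t -> s = t) -> orthon f1 f2 f3 ->
  (forall s, in_I l s -> exists t, in_I l t /\ vadd p (Aapp f1 f2 f3 (c s)) = c t) ->
  (exists s, in_I l s /\ vadd p (Aapp f1 f2 f3 (c s)) <> c s) ->
  forall s, in_I l s -> vadd p (Aapp f1 f2 f3 (c s)) = c (- s).
Proof.
  intros Hl Hc Hu Hinj Ho Hon Hnt.
  set (Tf := fun x => vadd p (Aapp f1 f2 f3 x)) in *.
  assert (Tiso : forall x y, dot (vsub (Tf x) (Tf y)) (vsub (Tf x) (Tf y)) = dot (vsub x y) (vsub x y)).
  { intros x y. replace (vsub (Tf x) (Tf y)) with (Aapp f1 f2 f3 (vsub x y)) by (unfold Tf; vd; vring).
    apply dot_A; auto. }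
  assert (Hch : forall s, {t | in_I l s -> in_I l t /\ Tf (c s) = c t}).
  { intro s. apply constructive_indefinite_description.
    destruct (classic (in_I l s)) as [Hs | Hs].
    - destruct (Hon s Hs) as [t [Ht1 Ht2]]. exists t; auto.
    - exists 0; intro; contradiction. }
  set (phi0 := fun s => proj1_sig (Hch s)).
  assert (Fphi0 : forall s, in_I l s -> in_I l (phi0 s) /\ Tf (c s) = c (phi0 s))
    by (intro s; exact (proj2_sig (Hch s))).
  clearbody phi0. clear Hch.
  unfold in_I in *.
  set (clamp := fun x => Rmax (- (l / 2)) (Rmin (l / 2) x)).
  assert (Cin : forall x, - (l / 2) <= clamp x <= l / 2).
  { intro x; unfold clamp, Rmax, Rmin; repeat destruct Rle_dec; lra. }
  assert (Cid : forall x, - (l / 2) <= x <= l / 2 -> clamp x = x).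
  { intros x Hx; unfold clamp, Rmax, Rmin; repeat destruct Rle_dec; lra. }
  assert (Clip : forall x y, Rabs (clamp x - clamp y) <= Rabs (x - y)).
  { intros x y; unfold clamp, Rmax, Rmin; repeat destruct Rle_dec; split_Rabs; lra. }
  clearbody clamp.
  assert (FD : forall a b, - (l / 2) <= a <= l / 2 -> - (l / 2) <= b <= l / 2 ->
                Dd c (phi0 a) (phi0 b) = Dd c a b).
  { intros a b Ha Hb. unfold Dd. rewrite <- (proj2 (Fphi0 a Ha)), <- (proj2 (Fphi0 b Hb)). apply Tiso. }
  assert (Finj : forall a b, - (l / 2) <= a <= l / 2 -> - (l / 2) <= b <= l / 2 -> phi0 a = phi0 b -> a = b).
  { intros a b Ha Hb E. apply Hinj; auto. apply Dd_0. rewrite <- FD by auto. rewrite E. apply Dd_refl. }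
  assert (Dcont : forall y x, continuity_pt (fun t => Dd c t y) x).
  { intros y x. apply exd_cont. destruct (Hc x) as (gx & gy & gz).
    exact (exd_D _ _ _ (vx (c y)) (vy (c y)) (vz (c y)) x gx gy gz). }
  assert (Sep : forall t0, - (l / 2) <= t0 <= l / 2 -> forall e, 0 < e -> exists d, 0 < d /\
            forall t, - (l / 2) <= t <= l / 2 -> Dd c t t0 < d -> Rabs (t - t0) < e).
  { intros t0 Ht0 e He.
    assert (piece : forall a b, (forall t, a <= t <= b -> - (l / 2) <= t <= l / 2 /\ t <> t0) ->
              exists m, 0 < m /\ forall t, a <= t <= b -> m <= Dd c t t0).
    { intros a b Hab. destruct (Rle_lt_dec a b) as [Hle | Hlt].
      - destruct (continuity_ab_min (fun t => Dd c t t0) a b Hle (fun t _ => Dcont t0 t)) as [mx [Hmx1 Hmx2]].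
        exists (Dd c mx t0). split; auto.
        destruct (Hab mx Hmx2) as [Hmx3 Hmx4].
        destruct (Dd_pos c mx t0) as [Hp | Hz]; auto.
        exfalso. apply Hmx4. apply Hinj; auto. apply Dd_0; auto.
      - exists 1; split; [lra|]. intros; lra. }
    destruct (piece (- (l / 2)) (t0 - e)) as [m1 [Hm1 Hm1']]. { intros t Ht; split; lra. }
    destruct (piece (t0 + e) (l / 2)) as [m2 [Hm2 Hm2']]. { intros t Ht; split; lra. }
    exists (Rmin m1 m2). split. apply Rmin_pos; auto.
    intros t Ht HD.
    assert (R1 : Rmin m1 m2 <= m1) by apply Rmin_l. assert (R2 : Rmin m1 m2 <= m2) by apply Rmin_r.
    destruct (Rlt_dec (Rabs (t - t0)) e) as [ok | nok]; auto. exfalso.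
    destruct (Rle_dec t t0).
    - rewrite Rabs_left1 in nok by lra. specialize (Hm1' t ltac:(lra)). lra.
    - rewrite Rabs_right in nok by lra. specialize (Hm2' t ltac:(lra)). lra. }
  assert (Cphi0 : forall s0, - (l / 2) <= s0 <= l / 2 -> forall e, 0 < e -> exists d, 0 < d /\
            forall s, - (l / 2) <= s <= l / 2 -> Rabs (s - s0) < d -> Rabs (phi0 s - phi0 s0) < e).
  { intros s0 Hs0 e He.
    destruct (Sep (phi0 s0) (proj1 (Fphi0 s0 Hs0)) e He) as [d1 [Hd1 Hd1']].
    destruct (cont_eps _ _ (Dcont s0 s0) d1 Hd1) as [d [Hd Hd']].
    exists d; split; auto. intros s Hs Hss.
    apply Hd1'. apply (Fphi0 s Hs). rewrite FD by auto.
    specialize (Hd' s Hss). rewrite Dd_refl, Rminus_0_r in Hd'.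
    pose proof (Rle_abs (Dd c s s0)). lra. }
  set (phi := fun x => phi0 (clamp x)).
  assert (Pid : forall x, - (l / 2) <= x <= l / 2 -> phi x = phi0 x).
  { intros x Hx; unfold phi; rewrite Cid; auto. }
  assert (Cphi : continuity phi).
  { intro x. apply eps_cont. intros e He.
    destruct (Cphi0 (clamp x) (Cin x) e He) as [d [Hd Hd']].
    exists d; split; auto. intros t Ht. unfold phi. apply Hd'; auto.
    eapply Rle_lt_trans; [apply Clip | auto]. }
  assert (Pinj : forall x y, - (l / 2) <= x <= l / 2 -> - (l / 2) <= y <= l / 2 -> phi x = phi y -> x = y).
  { intros x y Hx Hy E. rewrite !Pid in E by auto. apply Finj; auto. }
  assert (MON : exists sg, (sg = 1 \/ sg = -1) /\
     forall x y, - (l / 2) <= x -> x < y -> y <= l / 2 -> sg * phi x < sg * phi y).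
  { destruct (Req_dec (phi (- (l / 2))) (phi (l / 2))) as [E | E].
    { apply Pinj in E; lra. }
    destruct (Rlt_dec (phi (- (l / 2))) (phi (l / 2))) as [Hlt | Hnlt].
    - exists 1; split; auto. intros x y H1 H2 H3. rewrite !Rmult_1_l.
      apply (mono phi (- (l / 2)) (l / 2)); auto; lra.
    - exists (-1); split; auto. intros x y H1 H2 H3.
      assert (- phi x < - phi y).
      { apply (mono (fun x => - phi x) (- (l / 2)) (l / 2)); auto; try lra.
        change (fun x => - phi x) with (opp_fct phi). apply continuity_opp; auto.
        intros a b Ha Hb Eab. apply Pinj; auto; lra. }
      lra. }
  destruct MON as [sg [Hsg MON]].
  assert (Hsg2 : sg * sg = 1) by (destruct Hsg; subst; ring).
  assert (Deriv : forall b, - (l / 2) < b < l / 2 -> derivable_pt_lim phi b sg).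
  { intros b Hb e He.
    set (e1 := Rmin (1 / 3) (e / 5)).
    assert (He1 : 0 < e1) by (apply Rmin_pos; lra).
    assert (He1a : e1 <= 1 / 3) by apply Rmin_l. assert (He1b : e1 <= e / 5) by apply Rmin_r.
    assert (Hbi : - (l / 2) <= b <= l / 2) by lra.
    destruct (chord c b Hc (Hu b Hbi) e1 He1) as [d1 [Hd1 Hd1']].
    destruct (Fphi0 b Hbi) as [Hpb _].
    destruct (chord c (phi0 b) Hc (Hu _ Hpb) e1 He1) as [d2 [Hd2 Hd2']].
    destruct (Cphi0 b Hbi d2 Hd2) as [d3 [Hd3 Hd3']].
    assert (Hdel : 0 < Rmin d1 (Rmin d3 (Rmin (l / 2 - b) (b + l / 2)))).
    { repeat apply Rmin_pos; lra. }
    exists (mkposreal _ Hdel). intros h Hh0 Hh. simpl in Hh.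
    assert (Q1 : Rabs h < d1) by (eapply Rlt_le_trans; [exact Hh | apply Rmin_l]).
    assert (Q2 : Rabs h < d3) by (eapply Rlt_le_trans; [exact Hh | eapply Rle_trans; [apply Rmin_r | apply Rmin_l]]).
    assert (Q3 : Rabs h < l / 2 - b) by (eapply Rlt_le_trans; [exact Hh | eapply Rle_trans; [apply Rmin_r | eapply Rle_trans; [apply Rmin_r | apply Rmin_l]]]).
    assert (Q4 : Rabs h < b + l / 2) by (eapply Rlt_le_trans; [exact Hh | eapply Rle_trans; [apply Rmin_r | eapply Rle_trans; [apply Rmin_r | apply Rmin_r]]]).
    assert (Hbh : - (l / 2) <= b + h <= l / 2) by (split_Rabs; lra).
    rewrite !Pid by auto.
    set (k := phi0 (b + h) - phi0 b).
    assert (E1 : Rabs (Dd c (b + h) b - h ^ 2) <= e1 * h ^ 2).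
    { replace h with (b + h - b) at 2 3 by ring. apply Hd1'. replace (b + h - b) with h by ring. auto. }
    assert (E2 : Rabs (Dd c (phi0 (b + h)) (phi0 b) - k ^ 2) <= e1 * k ^ 2).
    { apply Hd2'. apply Hd3'; auto. replace (b + h - b) with h by ring; auto. }
    rewrite FD in E2 by auto.
    assert (Sg : 0 < sg * k * h).
    { unfold k. destruct (Rlt_dec 0 h).
      - specialize (MON b (b + h) ltac:(lra) ltac:(lra) ltac:(lra)). rewrite !Pid in MON by auto. nra.
      - assert (h < 0) by lra.
        specialize (MON (b + h) b ltac:(lra) ltac:(lra) ltac:(lra)). rewrite !Pid in MON by auto. nra. }
    assert (Ek : Rabs (k ^ 2 - h ^ 2) <= e1 * (h ^ 2 + k ^ 2)).
    { replace (k ^ 2 - h ^ 2) with ((Dd c (b + h) b - h ^ 2) - (Dd c (b + h) b - k ^ 2)) by ring.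
      eapply Rle_trans; [apply Rabs_triang|]. rewrite Rabs_Ropp. lra. }
    set (r := sg * k / h).
    assert (Hr : 0 < r).
    { unfold r. replace (sg * k / h) with ((sg * k * h) / (h * h)) by (field; auto).
      apply Rdiv_lt_0_compat; auto. nra. }
    assert (Hkr : k = sg * r * h) by (unfold r; replace (sg * (sg * k / h) * h) with ((sg * sg) * k) by (field; auto); rewrite Hsg2; ring).
    assert (Hh2 : 0 < h * h) by nra.
    assert (Er : Rabs (r * r - 1) <= e1 * (1 + r * r)).
    { assert (Hk2 : k ^ 2 = r * r * h * h)
        by (rewrite Hkr; replace ((sg * r * h) ^ 2) with ((sg * sg) * (r * r * h * h)) by ring; rewrite Hsg2; ring).
      rewrite Hk2 in Ek.
      replace (r * r * h * h - h ^ 2) with ((h * h) * (r * r - 1)) in Ek by ring.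
      replace (e1 * (h ^ 2 + r * r * h * h)) with ((h * h) * (e1 * (1 + r * r))) in Ek by ring.
      rewrite Rabs_mult, (Rabs_right (h * h)) in Ek by lra.
      apply Rmult_le_reg_l with (h * h); auto. }
    replace (k / h - sg) with (sg * (r - 1)) by (rewrite Hkr; replace (sg * r * h / h - sg) with (sg * (r - 1)) by (field; auto); reflexivity).
    rewrite Rabs_mult. replace (Rabs sg) with 1 by (destruct Hsg; subst; unfold Rabs; destruct Rcase_abs; lra).
    rewrite Rmult_1_l.
    apply Rabs_le_between in Er. destruct Er as [Er1 Er2].
    assert (Hrr : r * r <= 2) by nra.
    apply Rabs_def1; nra. }
  assert (Lin : forall x, - (l / 2) < x < l / 2 -> phi x = sg * x + phi 0).
  { intros x Hx.
    assert (Hd : forall t, Rmin 0 x < t < Rmax 0 x -> is_derive (fun y => phi y - sg * y) t 0).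
    { intros t Ht.
      assert (Ht' : - (l / 2) < t < l / 2).
      { unfold Rmin, Rmax in Ht; destruct Rle_dec in Ht; lra. }
      assert (H2 : is_derive (fun x => phi x - sg * x) t (sg - sg * 1)).
      { apply (is_derive_minus phi (fun x => sg * x)).
        apply is_derive_Reals; auto. apply is_derive_scal. apply (is_derive_id (K:=R_AbsRing)). }
      replace 0 with (sg - sg * 1) by ring. exact H2. }
    assert (Hct : forall t, Rmin 0 x <= t <= Rmax 0 x -> continuity_pt (fun y => phi y - sg * y) t).
    { intros t _. change (fun y => phi y - sg * y) with (minus_fct phi (mult_real_fct sg id)).
      apply continuity_pt_minus; auto. apply continuity_pt_scal. apply derivable_continuous_pt, derivable_pt_id. }
    destruct (MVT_gen (fun y => phi y - sg * y) 0 x (fun _ => 0) Hd Hct) as [cc [_ Hcc]].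
    lra. }
  set (K := phi 0) in *. clearbody K.
  assert (PL : - (l / 2) <= phi (l / 2) <= l / 2) by (rewrite Pid by lra; apply Fphi0; lra).
  assert (PmL : - (l / 2) <= phi (- (l / 2)) <= l / 2) by (rewrite Pid by lra; apply Fphi0; lra).
  assert (Pin : forall x, - (l / 2) < x < l / 2 -> - (l / 2) <= sg * x + K <= l / 2).
  { intros x Hx. rewrite <- Lin by auto. rewrite Pid by lra. apply Fphi0; lra. }
  destruct Hsg as [-> | ->].
  - (* identity: contradiction *)
    exfalso.
    assert (ML : forall x, - (l / 2) < x < l / 2 -> x + K < phi (l / 2)).
    { intros x Hx. specialize (MON x (l / 2) ltac:(lra) ltac:(lra) ltac:(lra)). rewrite (Lin x) in MON by auto. lra. }
    assert (MmL : forall x, - (l / 2) < x < l / 2 -> phi (- (l / 2)) < x + K).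
    { intros x Hx. specialize (MON (- (l / 2)) x ltac:(lra) ltac:(lra) ltac:(lra)). rewrite (Lin x) in MON by auto. lra. }
    assert (K0 : K = 0).
    { destruct (Rtotal_order K 0) as [Hk | [Hk | Hk]]; auto.
      - set (m := Rmin (- K) (l / 2)). assert (0 < m) by (apply Rmin_pos; lra).
        assert (m <= - K) by apply Rmin_l. assert (m <= l / 2) by apply Rmin_r.
        specialize (MmL (- (l / 2) + m / 2) ltac:(lra)). lra.
      - set (m := Rmin K (l / 2)). assert (0 < m) by (apply Rmin_pos; lra).
        assert (m <= K) by apply Rmin_l. assert (m <= l / 2) by apply Rmin_r.
        specialize (ML (l / 2 - m / 2) ltac:(lra)). lra. }
    subst K.
    assert (EL : phi (l / 2) = l / 2).
    { destruct (Req_dec (phi (l / 2)) (l / 2)) as [E|E]; auto.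
      specialize (ML ((phi (l / 2) + l / 2) / 2) ltac:(lra)). lra. }
    assert (EmL : phi (- (l / 2)) = - (l / 2)).
    { destruct (Req_dec (phi (- (l / 2))) (- (l / 2))) as [E|E]; auto.
      specialize (MmL ((phi (- (l / 2)) - l / 2) / 2) ltac:(lra)). lra. }
    destruct Hnt as [s [Hs Hne]]. apply Hne.
    transitivity (Tf (c s)); [reflexivity|]. rewrite (proj2 (Fphi0 s Hs)). f_equal. rewrite <- Pid by auto.
    destruct (Req_dec s (l / 2)) as [-> | N1]; auto.
    destruct (Req_dec s (- (l / 2))) as [-> | N2]; auto.
    rewrite Lin by lra. ring.
  - assert (ML : forall x, - (l / 2) < x < l / 2 -> - x + K < phi (l / 2) -> False).
    { intros x Hx. specialize (MON x (l / 2) ltac:(lra) ltac:(lra) ltac:(lra)). rewrite (Lin x) in MON by auto. lra. }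
    assert (MmL : forall x, - (l / 2) < x < l / 2 -> phi (- (l / 2)) < - x + K -> False).
    { intros x Hx. specialize (MON (- (l / 2)) x ltac:(lra) ltac:(lra) ltac:(lra)). rewrite (Lin x) in MON by auto. lra. }
    assert (K0 : K = 0).
    { destruct (Rtotal_order K 0) as [Hk | [Hk | Hk]]; auto.
      - set (m := Rmin (- K) (l / 2)). assert (0 < m) by (apply Rmin_pos; lra).
        assert (m <= - K) by apply Rmin_l. assert (m <= l / 2) by apply Rmin_r.
        exfalso; apply (ML (l / 2 - m / 2)); lra.
      - set (m := Rmin K (l / 2)). assert (0 < m) by (apply Rmin_pos; lra).
        assert (m <= K) by apply Rmin_l. assert (m <= l / 2) by apply Rmin_r.
        exfalso; apply (MmL (- (l / 2) + m / 2)); lra. }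
    subst K.
    assert (EL : phi (l / 2) = - (l / 2)).
    { destruct (Req_dec (phi (l / 2)) (- (l / 2))) as [E|E]; auto.
      exfalso; apply (ML ((l / 2 - phi (l / 2)) / 2)); lra. }
    assert (EmL : phi (- (l / 2)) = l / 2).
    { destruct (Req_dec (phi (- (l / 2))) (l / 2)) as [E|E]; auto.
      exfalso; apply (MmL (- ((phi (- (l / 2)) + l / 2) / 2))); lra. }
    intros s Hs. transitivity (Tf (c s)); [reflexivity|]. rewrite (proj2 (Fphi0 s Hs)). f_equal. rewrite <- Pid by auto.
    destruct (Req_dec s (l / 2)) as [-> | N1]; auto.
    destruct (Req_dec s (- (l / 2))) as [-> | N2]. { rewrite EmL; ring. }
    rewrite Lin by lra. ring.
Qed.

Lemma cos_same x y : - (PI / 2) < x < PI / 2 -> - (PI / 2) < y < PI / 2 -> 0 < x * y -> cos x = cos y -> x = y.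
Proof.
  intros Hx Hy Hxy E. pose proof PI_RGT_0.
  destruct (Rlt_dec 0 x).
  - assert (0 < y) by nra. apply cos_inj; lra.
  - assert (x < 0) by nra. assert (y < 0) by nra.
    cut (- x = - y). lra. apply cos_inj; try lra. rewrite !cos_neg; auto.
Qed.

Lemma same_sign (f : R -> R) a b : (forall t, ex_derive f t) ->
  (forall t, a <= t <= b -> f t <> 0) -> forall x y, a <= x <= b -> a <= y <= b -> 0 < f x * f y.
Proof.
  intros Hd Hn.
  assert (Hc : continuity f) by (intro t; apply exd_cont; auto).
  assert (Hc' : continuity (fun t => - f t)) by (change (fun t => - f t) with (opp_fct f); apply continuity_opp; auto).
  assert (K : forall x y, a <= x <= b -> a <= y <= b -> x <= y -> 0 < f x * f y).
  { intros x y Hx Hy Hxy. pose proof (Hn x Hx). pose proof (Hn y Hy).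
    destruct (Rlt_dec 0 (f x * f y)) as [ok|nok]; auto. exfalso.
    destruct (Req_dec x y) as [<- | Hne]. { nra. }
    destruct (Rlt_dec (f x) 0).
    - assert (0 < f y) by nra.
      destruct (IVT f x y Hc ltac:(lra) ltac:(lra) ltac:(lra)) as [z [Hz Hz2]].
      apply (Hn z); auto; lra.
    - assert (0 < f x) by lra. assert (f y < 0) by nra.
      destruct (IVT _ x y Hc' ltac:(lra) ltac:(lra) ltac:(lra)) as [z [Hz Hz2]].
      apply (Hn z); lra. }
  intros x y Hx Hy. destruct (Rle_dec x y). apply K; auto. rewrite Rmult_comm; apply K; auto; lra.
Qed.

Lemma vscal_m1 x y : vscal (-1) x = y -> x = vscal (-1) y.
Proof. intros <-. vd; vring. Qed.

Theorem theorem4p2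
  (l : R) (c : R -> V3) (alpha alpha_s : R -> R) (T : V3 -> V3) :
  0 < l ->
  smooth_curve c ->
  (forall s, in_I l s -> vnorm (Dv c s) = 1) ->
  (forall s t, in_I l s -> in_I l t -> c s = c t -> s = t) ->
  (forall s, in_I l s -> curvature c s <> 0) ->
  (* F = normal_form c alpha in D_*(C) *)
  smooth_fun alpha ->
  (forall s, in_I l s -> - (PI / 2) < alpha s < PI / 2 /\ alpha s <> 0) ->
  (forall s t, in_I l s -> in_I l t -> mu_nf c alpha s < curvature c t) ->
  (* alpha_s : the first angular function of the inverse F_* *)
  smooth_fun alpha_s ->
  (forall s, in_I l s ->
     - (PI / 2) < alpha_s s < PI / 2 /\ 0 < alpha_s s * alpha s /\
     curvature (rev_curve c) s * cos (alpha_s s) = curvature c s * cos (alpha s)) ->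
  nontrivial_symmetry l c T ->
  (positive_isometry T ->
     germ_eq l (fun s v => T (normal_form c alpha s v)) (normal_form (rev_curve c) alpha_s) /\
     ((forall s, in_I l s -> mu_nf c alpha (- s) = mu_nf c alpha s) ->
      germ_eq l (fun s v => T (normal_form c alpha (- s) v))
                (normal_form c (fun s => - alpha s)))) /\
  (negative_isometry T ->
     germ_eq l (fun s v => T (normal_form c alpha s v))
               (normal_form (rev_curve c) (fun s => - alpha_s s)) /\
     ((forall s, in_I l s -> mu_nf c alpha (- s) = mu_nf c alpha s) ->
      germ_eq l (fun s v => T (normal_form c alpha (- s) v)) (normal_form c alpha))).
Proof.
  intros Hl Hsm Hunit Hinj Hk0 Hsa Hal Hadm Hsas Has Hsym.
  destruct (smooth_cder c Hsm) as (Hc & Hc1 & Hc2).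
  destruct Hsym as (HT & _ & Hon1 & _ & Hnt).
  pose proof (iso_affine T HT) as Haf. cbv zeta in Haf.
  set (p := T (mkV 0 0 0)) in *.
  set (f1 := vsub (T e1) p) in *. set (f2 := vsub (T e2) p) in *. set (f3 := vsub (T e3) p) in *.
  destruct Haf as [Ho Haff].
  assert (Hod : orient_det T = det3 f1 f2 f3) by reflexivity.
  set (d := det3 f1 f2 f3) in *.
  assert (Hd : d = 1 \/ d = -1).
  { pose proof (det_sq _ _ _ Ho) as H. fold d in H.
    destruct (Rle_dec 0 d); [left | right]; nra. }
  set (A := Aapp f1 f2 f3) in *.
  assert (Hlt : - (l / 2) < l / 2) by lra.
  assert (Hrev : forall s, in_I l s -> vadd p (A (c s)) = c (- s)).
  { apply (sym_rev l c f1 f2 f3 p Hl Hc Hunit Hinj Ho).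
    - intros s Hs. destruct (Hon1 (c s) (ex_intro _ s (conj Hs eq_refl))) as [t [Ht E]].
      exists t; split; auto. rewrite <- Haff; auto.
    - destruct Hnt as [x [[s [Hs ->]] Hne]]. exists s; split; auto. rewrite <- Haff; auto. }
  assert (St0 : forall t, - (l / 2) <= t <= l / 2 -> vscal 1 (c (- t)) = vadd p (A (c t))).
  { intros t Ht. rewrite vscal1, Hrev; auto. }
  pose proof (key_step c f1 f2 f3 p 1 _ _ Hlt Hc St0) as St1.
  assert (St1' : forall t, - (l / 2) <= t <= l / 2 -> vscal (-1) (Dv c (- t)) = A (Dv c t)).
  { intros t Ht. rewrite <- St1 by auto. f_equal; ring. }
  assert (St1'' : forall t, - (l / 2) <= t <= l / 2 -> vscal (- 1) (Dv c (- t)) = vadd (mkV 0 0 0) (A (Dv c t))).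
  { intros t Ht. rewrite vadd0, St1 by auto. reflexivity. }
  pose proof (key_step (Dv c) f1 f2 f3 (mkV 0 0 0) (- 1) _ _ Hlt Hc1 St1'') as St2.
  assert (St2' : forall t, - (l / 2) <= t <= l / 2 -> Dv (Dv c) (- t) = A (Dv (Dv c) t)).
  { intros t Ht. rewrite <- St2 by auto. rewrite <- (vscal1 (Dv (Dv c) (- t))) at 1. f_equal; ring. }
  assert (St2'' : forall t, - (l / 2) <= t <= l / 2 -> vscal (- - 1) (Dv (Dv c) (- t)) = vadd (mkV 0 0 0) (A (Dv (Dv c) t))).
  { intros t Ht. rewrite vadd0, St2 by auto. reflexivity. }
  pose proof (key_step (Dv (Dv c)) f1 f2 f3 (mkV 0 0 0) (- - 1) _ _ Hlt Hc2 St2'') as St3.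
  assert (St3' : forall t, - (l / 2) <= t <= l / 2 -> vscal (-1) (Dv (Dv (Dv c)) (- t)) = A (Dv (Dv (Dv c)) t)).
  { intros t Ht. rewrite <- St3 by auto. f_equal; ring. }
  clear St1 St1'' St2 St2'' St3.
  assert (F1 : Dv (rev_curve c) = fun t => vscal (-1) (Dv c (- t))).
  { apply functional_extensionality; intro t.
    rewrite (Dv_rev c (rev_curve c) 1 Hc (fun t => eq_sym (vscal1 _)) t). f_equal; ring. }
  assert (F2 : Dv (Dv (rev_curve c)) = fun t => Dv (Dv c) (- t)).
  { apply functional_extensionality; intro t. rewrite F1.
    rewrite (Dv_rev (Dv c) _ (-1) Hc1 (fun t => eq_refl) t). rewrite <- (vscal1 (Dv (Dv c) (- t))) at 2. f_equal; ring. }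
  assert (F3 : Dv (Dv (Dv (rev_curve c))) = fun t => vscal (-1) (Dv (Dv (Dv c)) (- t))).
  { apply functional_extensionality; intro t. rewrite F2.
    rewrite (Dv_rev (Dv (Dv c)) _ 1 Hc2 (fun t => eq_sym (vscal1 _)) t). f_equal; ring. }
  assert (Ea : forall t, ex_derive alpha t) by (intro t; exact (Hsa 1%nat t)).
  assert (Eas : forall t, ex_derive alpha_s t) by (intro t; exact (Hsas 1%nat t)).
  assert (TF : forall x v w, T (vadd x (vscal v w)) = vadd (vadd p (A x)) (vscal v (A w))).
  { intros x v w. rewrite Haff. fold A. unfold A. rewrite A_add, A_scal. vd; vring. }
  assert (Trip : forall s, in_I l s ->
     Dv (rev_curve c) s = A (Dv c s) /\ Dv (Dv (rev_curve c)) s = A (Dv (Dv c) s) /\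
     Dv (Dv (Dv (rev_curve c))) s = A (Dv (Dv (Dv c)) s)).
  { intros s Hs. rewrite F3, F2, F1. unfold in_I in Hs. split; [|split]; auto. }
  assert (Kr : forall s, in_I l s -> curvature (rev_curve c) s = curvature c s).
  { intros s Hs. destruct (Trip s Hs) as (T1 & T2 & _). rewrite !curv_F, T1, T2. unfold A; apply curvF_A; auto. }
  assert (Aeq : forall s, in_I l s -> alpha_s s = alpha s).
  { intros s Hs. destruct (Has s Hs) as (H1 & H2 & H3). destruct (Hal s Hs) as [H4 _].
    apply cos_same; auto. rewrite Kr in H3 by auto. apply Rmult_eq_reg_l with (curvature c s); auto. }
  assert (Daeq : forall s, in_I l s -> Derive alpha_s s = Derive alpha s).
  { intros s Hs. apply (DE _ _ (- (l / 2)) (l / 2)); auto. }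
  assert (Xi1 : forall s, in_I l s -> A (xi_nf c alpha s) = XI (A (Dv c s)) (A (Dv (Dv c) s)) (A (Dv (Dv (Dv c)) s)) (d * alpha s) (d * Derive alpha s)).
  { intros s Hs. unfold A, d. rewrite L1; auto. }
  assert (Tri2 : forall s, in_I l s ->
     Dv c s = vscal (-1) (A (Dv c (- s))) /\ Dv (Dv c) s = A (Dv (Dv c) (- s)) /\
     Dv (Dv (Dv c)) s = vscal (-1) (A (Dv (Dv (Dv c)) (- s)))).
  { intros s Hs. unfold in_I in Hs.
    assert (Hs' : - (l / 2) <= - s <= l / 2) by lra.
    pose proof (St1' (- s) Hs') as E1. pose proof (St2' (- s) Hs') as E2. pose proof (St3' (- s) Hs') as E3.
    rewrite Ropp_involutive in E1, E2, E3.
    split; [|split]; auto; apply vscal_m1; auto. }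
  assert (Ksym : forall s, in_I l s -> curvature c s = curvature c (- s)).
  { intros s Hs. destruct (Tri2 s Hs) as (T1 & T2 & _). rewrite !curv_F, T1, T2.
    rewrite curvF_neg. unfold A; apply curvF_A; auto. }
  assert (Xi2 : forall s x y, in_I l s -> XI (Dv c s) (Dv (Dv c) s) (Dv (Dv (Dv c)) s) (d * - x) (d * y)
                = A (XI (Dv c (- s)) (Dv (Dv c) (- s)) (Dv (Dv (Dv c)) (- s)) x y)).
  { intros s x y Hs. destruct (Tri2 s Hs) as (T1 & T2 & T3). rewrite T1, T2, T3.
    unfold A. rewrite <- !A_scal. rewrite L1; auto. rewrite L2. reflexivity. }
  assert (Part2 : (forall s, in_I l s -> mu_nf c alpha (- s) = mu_nf c alpha s) ->
     forall s, in_I l s -> alpha s = alpha (- s) /\ Derive alpha s = - Derive alpha (- s)).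
  { intros Hmu.
    assert (AS : forall s, in_I l s -> alpha s = alpha (- s)).
    { intros s Hs. assert (Hs' : in_I l (- s)) by (unfold in_I in *; lra).
      apply cos_same; try apply Hal; auto.
      - apply (same_sign alpha (- (l / 2)) (l / 2)); auto. intros t Ht; apply Hal; auto.
      - specialize (Hmu s Hs). unfold mu_nf in Hmu. rewrite <- Ksym in Hmu by auto.
        apply Rmult_eq_reg_l with (curvature c s); auto. }
    intros s Hs. split; auto.
    assert (E : Derive alpha s = Derive (fun t => alpha (- t)) s).
    { apply (DE _ _ (- (l / 2)) (l / 2)); auto;
      first [ intros t Ht; apply AS; exact Ht | intro t; auto_derive; auto ]. }
    rewrite E. rewrite (Derive_ext _ (fun t => 1 * alpha (- t))) by (intro; ring).
    rewrite der_rev by auto. ring. }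
  assert (P1 : forall al, (forall s, in_I l s -> A (xi_nf c alpha s) = xi_nf (rev_curve c) al s) ->
     germ_eq l (fun s v => T (normal_form c alpha s v)) (normal_form (rev_curve c) al)).
  { intros al H. exists 1; split; [lra|]. intros s v Hs Hv. unfold normal_form.
    rewrite TF, Hrev by auto. unfold rev_curve at 1. rewrite H by auto. reflexivity. }
  assert (P2 : forall al, (forall s, in_I l s -> A (xi_nf c alpha (- s)) = xi_nf c al s) ->
     germ_eq l (fun s v => T (normal_form c alpha (- s) v)) (normal_form c al)).
  { intros al H. exists 1; split; [lra|]. intros s v Hs Hv. unfold normal_form.
    assert (Hs' : in_I l (- s)) by (unfold in_I in *; lra).
    rewrite TF, Hrev by auto. rewrite Ropp_involutive, H by auto. reflexivity. }
  split; intros [_ Hsign]; rewrite Hod in Hsign.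
  1: assert (Hdv : d = 1) by (destruct Hd; lra).
  2: assert (Hdv : d = -1) by (destruct Hd; lra).
  all: split; [ apply P1 | intro Hmu; apply P2 ]; intros s Hs.
  - rewrite Xi1 by auto. rewrite !xi_XI. destruct (Trip s Hs) as (T1 & T2 & T3).
    rewrite T1, T2, T3, Aeq, Daeq by auto. rewrite Hdv. f_equal; ring.
  - destruct (Part2 Hmu s Hs) as [HA HD]. rewrite !xi_XI. rewrite <- Xi2 by auto. cbv beta.
    rewrite Derive_opp, HD, HA, Hdv. f_equal; ring.
  - rewrite Xi1 by auto. rewrite !xi_XI. destruct (Trip s Hs) as (T1 & T2 & T3).
    rewrite T1, T2, T3. cbv beta. rewrite Derive_opp, Aeq, Daeq by auto. rewrite Hdv. f_equal; ring.
  - destruct (Part2 Hmu s Hs) as [HA HD]. rewrite !xi_XI. rewrite <- Xi2 by auto.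
    rewrite HD, HA, Hdv. f_equal; ring.
Qed.
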